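(* Let $V_0\subseteq\mathbb{R}^n$ be a finite set, $\mathcal{K}$ a compact topological space, and for each $v\in V_0$ let $r_v:\mathcal{K}\to[-\infty,\infty)$ be continuous. For $\kappa\in\mathcal{K}$ set $f_\kappa(x)=\max_{v\in V_0}(\langle x,v\rangle+r_v(\kappa))$ for $x\in\mathbb{R}^n$, and assume that for every $\kappa$ the set $V_\kappa=\{v\in V_0:r_v(\kappa)>-\infty\}$ is nonempty (so $f_\kappa$ is real-valued) and that the point $u$ of minimal Euclidean norm in $\operatorname{conv}(V_\kappa)$ is the same for all $\kappa\in\mathcal{K}$. Then there is $C\in\mathbb{R}$ such that $f_\kappa(x)\ge\langle x,u\rangle+C$ for all $\kappa\in\mathcal{K}$ and all $x\in\mathbb{R}^n$.
   Context: $[-\infty,\infty)$ carries its usual order topology. *)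

(* Defs.v *)
From HB Require Import structures.
From mathcomp Require Import all_boot all_order all_algebra.
From mathcomp Require Import all_classical all_reals all_analysis.
Set Implicit Arguments. Unset Strict Implicit. Unset Printing Implicit Defensive.
Import Order.TTheory GRing.Theory Num.Theory.
Local Open Scope classical_set_scope.
Local Open Scope ring_scope.

Definition dotp (R : realType) (n : nat) (x y : 'rV[R]_n) : R :=
  \sum_(i < n) x ord0 i * y ord0 i.

Definition enorm (R : realType) (n : nat) (x : 'rV[R]_n) : R :=
  Num.sqrt (dotp x x).

Definition conv_hull (R : realType) (n : nat) (S : set 'rV[R]_n)
  : set 'rV[R]_n :=
  [set x | exists (m : nat) (w : 'I_m -> R) (p : 'I_m -> 'rV[R]_n),
     [/\ (forall i, 0 <= w i), \sum_(i < m) w i = 1,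
         (forall i, S (p i)) & x = \sum_(i < m) w i *: p i]].

Definition fmax (R : realType) (n : nat) (K : Type) (V0 : seq 'rV[R]_n)
  (r : 'rV[R]_n -> K -> \bar R) (k : K) (x : 'rV[R]_n) : \bar R :=
  \big[Order.max/-oo%E]_(v <- V0) ((dotp x v)%:E + r v k)%E.

Definition Vk (R : realType) (n : nat) (K : Type) (V0 : seq 'rV[R]_n)
  (r : 'rV[R]_n -> K -> \bar R) (k : K) : set 'rV[R]_n :=
  [set v | v \in V0 /\ (-oo < r v k)%E].

(* Main.v *)
Require Import Defs.
From HB Require Import structures.
From mathcomp Require Import all_boot all_order all_algebra.
From mathcomp Require Import all_classical all_reals all_analysis.
Import Order.TTheory GRing.Theory Num.Theory.
Local Open Scope classical_set_scope.
Local Open Scope ring_scope.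

Lemma dotp_sum (R : realType) n m (w : 'I_m -> R) (p : 'I_m -> 'rV[R]_n) x :
  dotp x (\sum_j w j *: p j) = \sum_j w j * dotp x (p j).
Proof.
rewrite /dotp.
under eq_bigr => i _ do rewrite summxE mulr_sumr.
rewrite exchange_big /=; apply: eq_bigr => j _.
rewrite mulr_sumr; apply: eq_bigr => i _.
by rewrite mxE mulrCA.
Qed.

Lemma key (R : realType) n (K : Type) (V0 : seq 'rV[R]_n)
  (r : 'rV[R]_n -> K -> \bar R) k m (w : 'I_m -> R) (p : 'I_m -> 'rV[R]_n)
  (a : 'I_m -> R) :
  (forall j, 0 <= w j) -> \sum_j w j = 1 -> (forall j, p j \in V0) ->
  (forall j, ((a j)%:E <= r (p j) k)%E) ->
  forall x, ((dotp x (\sum_j w j *: p j) + \sum_j w j * a j)%:E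
     <= fmax V0 r k x)%E.
Proof.
move=> w0 w1 pV ar x.
have hb j : ((dotp x (p j) + a j)%:E <= fmax V0 r k x)%E.
  apply: le_trans (le_bigmax_seq _ _ (fun _ => true) _ (pV j) isT).
  by rewrite EFinD leeD2l.
case E: (fmax V0 r k x) => [y| |]; last 2 first.
- by rewrite leey.
- case: m w p a w0 w1 pV ar hb => [|m] w p a w0 w1 pV ar hb.
    by move: w1; rewrite big_ord0 => /eqP; rewrite eq_sym oner_eq0.
  by have := hb ord0; rewrite E.
rewrite lee_fin dotp_sum -big_split /=.
have -> : y = \sum_j w j * y by rewrite -mulr_suml w1 mul1r.
apply: ler_sum => j _; rewrite -mulrDr ler_wpM2l //.
by have := hb j; rewrite E lee_fin.
Qed.
Theorem lemma4p9 (R : realType) (n : nat) (K : topologicalType)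
  (V0 : seq 'rV[R]_n) (r : 'rV[R]_n -> K -> \bar R) (u : 'rV[R]_n) :
  compact [set: K] ->
  (forall v, v \in V0 -> continuous (r v)) ->
  (forall v k, v \in V0 -> r v k != +oo%E) ->
  (forall k, Vk V0 r k !=set0) ->
  (forall k, conv_hull (Vk V0 r k) u /\
     (forall w, conv_hull (Vk V0 r k) w -> enorm u <= enorm w)) ->
  exists C : R, forall (k : K) (x : 'rV[R]_n),
    ((dotp x u + C)%:E <= fmax V0 r k x)%E.
Proof.
move=> cK rc rfin _ hu.
pose P (i : R) (k : K) := forall x, ((dotp x u - i)%:E <= fmax V0 r k x)%E.
have : \forall i \near +oo, [set: K] `<=` P i.
  apply: (proj1 (compact_near_coveringP _) cK R (pinfty_nbhs R) P _) => k _.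
  have [[m [w [p [w0 w1 pV uE]]]] _] := hu k.
  pose a j := fine (r (p j) k) - 1.
  have near_j j : \forall k' \near k, ((a j)%:E <= r (p j) k')%E.
    have [pV0 rlt] := pV j.
    have rf : r (p j) k \is a fin_num.
      by rewrite fin_numE rfin // andbT; by move: rlt; case: (r (p j) k).
    have : ((a j)%:E < r (p j) k)%E.
      by rewrite /a -(fineK rf) lte_fin fineK // ltrBlDr ltrDl.
    move=> /open_ereal_gt' H.
    have := rc _ pV0 k _ H.
    rewrite nbhs_filterE => H2.
    exact: (filterS (fun k' => @ltW _ _ _ _) H2).
  have hall : \forall k' \near k, forall j, ((a j)%:E <= r (p j) k')%E.
    exact: filter_forall.
  near=> k' i => x.
  have Hk : forall j, ((a j)%:E <= r (p j) k')%E by near: k'.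
  rewrite uE /=. refine (le_trans _ (@key R n K V0 r k' m w p a w0 w1 (fun j => (pV j).1) Hk x)).
  rewrite lee_fin lerD2l lerNl; apply: ltW.
  near: i; exact: nbhs_pinfty_gt (num_real _).
case=> M [_ HM].
exists (- (M + 1)) => k x.
have := HM (M + 1); rewrite ltrDl ltr01 => /(_ isT k I x).
by [].
Unshelve. all: end_near. Qed.
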